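(* Let $\mathbb F$ be any field, $n\ge k>1$, and let $\mathcal K\subseteq M_{n\times k}(\mathbb F)$ be a linear variety with $\operatorname{codim}(\mathcal K)=k$ such that $\det_{n,k}(X)=0$ for all $X\in\mathcal K$. Let $B^*\subseteq[n]\times[k]$ be a cobasis of $\mathcal M(\mathcal K)$. If there is $1\le j'\le k$ with $B^*\cap([n]\times\{j'\})=\varnothing$, then $|B^*\cap(\{i\}\times[k])|\le 1$ for all $1\le i\le n$.
   Context: A linear variety is a nonempty set $\mathbf s+V$ with $V$ a linear subspace (uniquely determined); codimension is ambient dimension minus $\dim V$. Identify $M_{n\times k}(\mathbb F)$ with $\mathbb F^{[n]\times[k]}$, $(i,j)$ indexing row $i$, column $j$. Matroid $\mathcal M(\mathcal K)$ of $\mathcal K=\mathbf s+V\subseteq\mathbb F^E$: the matroid on $E$ with rank function $r(S)=\dim\operatorname{span}\{x_e|_V:e\in S\}$, $x_e$ the coordinate functionals. A cobasis is the complement of a basis (maximal independent set). Cullis' determinant: $\det_{n,k}(X)=\sum_{c}\operatorname{sgn}(c)\det(X[c|))$, sum over $k$-subsets $c=\{c(1)<\dots<c(k)\}$ of $[n]$, $X[c|)$ the submatrix of rows in $c$, $\operatorname{sgn}(c)=(-1)^{\sum_\alpha(c(\alpha)-\alpha)}$. *)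

(* Defs.v *)
From HB Require Import structures.
From mathcomp Require Import all_boot all_order all_algebra.
Set Implicit Arguments. Unset Strict Implicit. Unset Printing Implicit Defensive.
Import GRing.Theory.
Local Open Scope ring_scope.

(* Cullis' determinant.  A k-subset c = {c(1) < ... < c(k)} of [n] is encoded
   by the strictly increasing map alpha |-> c(alpha) : 'I_k -> 'I_n (0-based). *)
Definition incr_map (n k : nat) (f : {ffun 'I_k -> 'I_n}) : bool :=
  [forall a : 'I_k, forall b : 'I_k, (a < b)%N ==> (f a < f b)%N].

Definition cullis_sgn (F : fieldType) (n k : nat) (f : {ffun 'I_k -> 'I_n}) : F :=
  (-1) ^+ (\sum_(a < k) (f a - a))%N.

Definition cullis_det (F : fieldType) (n k : nat) (X : 'M[F]_(n, k)) : F :=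
  \sum_(f : {ffun 'I_k -> 'I_n} | incr_map f)
     cullis_sgn F f * \det (\matrix_(a < k, j < k) X (f a) j).

(* Matroid M(K) of K = s + V on E = [n] x [k]: S is independent iff the
   restrictions to V of the coordinate functionals x_e (e in S) are
   linearly independent. *)
Definition mx_indep (F : fieldType) (n k : nat) (V : {vspace 'M[F]_(n, k)})
    (S : {set 'I_n * 'I_k}) : Prop :=
  forall c : 'I_n * 'I_k -> F,
    (forall X, X \in V -> \sum_(e in S) c e * X e.1 e.2 = 0) ->
    forall e, e \in S -> c e = 0.

Definition mx_basis (F : fieldType) (n k : nat) (V : {vspace 'M[F]_(n, k)})
    (B : {set 'I_n * 'I_k}) : Prop :=
  mx_indep V B /\ forall T : {set 'I_n * 'I_k}, B \proper T -> ~ mx_indep V T.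

Definition mx_cobasis (F : fieldType) (n k : nat) (V : {vspace 'M[F]_(n, k)})
    (Bs : {set 'I_n * 'I_k}) : Prop :=
  exists B, mx_basis V B /\ Bs = ~: B.

(* Main.v *)
Require Import Defs.
From HB Require Import structures.
From mathcomp Require Import all_boot all_order all_algebra.
From mathcomp Require Import all_fingroup zify.
Set Implicit Arguments. Unset Strict Implicit. Unset Printing Implicit Defensive.
Import GRing.Theory.
Local Open Scope ring_scope.
Section DetPart.
Variables (F : fieldType) (n k : nat).

Lemma cullis_mulmx (X : 'M[F]_(n, k)) (E : 'M[F]_k) :
  cullis_det (X *m E) = cullis_det X * \det E.
Proof.
rewrite /cullis_det mulr_suml; apply: eq_bigr => f _.
rewrite -mulrA -det_mulmx; congr (_ * \det _).
by apply/matrixP => a j; rewrite !mxE; apply: eq_bigr => b _; rewrite !mxE.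
Qed.

Lemma det_ordtrig (E : 'M[F]_k) (tm : 'I_k -> nat) :
  (forall i, E i i = 1) ->
  (forall i j, i != j -> E i j != 0 -> (tm i < tm j)%N) -> \det E = 1.
Proof.
move=> Hd Ht; rewrite /determinant (bigD1 (1 : {perm 'I_k})%g) //=.
rewrite [X in _ + X]big1 ?addr0.
  by rewrite odd_perm1 expr0 mul1r big1 // => i _; rewrite perm1 Hd.
move=> s s1.
have [i0 Hi0] : exists i, s i != i.
  apply/existsP; apply: contraR s1 => /existsPn H.
  by apply/eqP/permP => i; rewrite perm1; apply/eqP; move: (H i); rewrite negbK.
case: (@arg_maxnP _ i0 (fun i => s i != i) tm Hi0) => i Hi Hmax.
rewrite (bigD1 i) //= [E i (s i)](_ : _ = 0) ?mul0r ?mulr0 //.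
apply/eqP; apply: contraT => HE.
have Hlt : (tm i < tm (s i))%N by apply: Ht HE; rewrite eq_sym.
have Hs : s (s i) != s i by rewrite (inj_eq perm_inj).
move: (Hmax _ Hs) => /= H; by move: Hlt; rewrite ltnNge H.
Qed.
End DetPart.
Section Incr.
Variables (n k : nat).

Definition ord_lt (a b : 'I_n) : bool := (a < b)%N.

Lemma incr_inj (f : {ffun 'I_k -> 'I_n}) : incr_map f -> injective f.
Proof.
move=> /forallP Hf a b Hab; apply/eqP; apply: contraT => Hn.
case: (ltngtP a b) => H.
- by move: (forallP (Hf a) b); rewrite H /= Hab ltnn.
- by move: (forallP (Hf b) a); rewrite H /= Hab ltnn.
- by move: Hn; rewrite (val_inj H) eqxx.
Qed.

Lemma enum_ord_sorted m : sorted (fun a b : 'I_m => (a < b)%N) (enum 'I_m).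
Proof. by rewrite -(@sorted_map _ _ val ltn) val_enum_ord iota_ltn_sorted. Qed.

Lemma incr_sorted (f : {ffun 'I_k -> 'I_n}) :
  incr_map f -> sorted ord_lt (map f (enum 'I_k)).
Proof.
move=> /forallP Hf; rewrite sorted_map; apply: sub_sorted (enum_ord_sorted k).
by move=> a b Hab; move: (forallP (Hf a) b); rewrite Hab.
Qed.

Lemma incr_eq (f g : {ffun 'I_k -> 'I_n}) : incr_map f -> incr_map g ->
  (forall a, exists b, f a = g b) -> f = g.
Proof.
move=> Hf Hg Hfg.
have Hs : map f (enum 'I_k) = map g (enum 'I_k).
  apply: (irr_sorted_eq (leT := ord_lt)).
  - by move=> a b c; rewrite /ord_lt; apply: ltn_trans.
  - by move=> a; rewrite /ord_lt ltnn.
  - exact: incr_sorted.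
  - exact: incr_sorted.
  apply: (uniq_min_size _ _ _).2.
  - by rewrite map_inj_uniq ?enum_uniq //; apply: incr_inj.
  - move=> x /mapP [a _ ->]; case: (Hfg a) => b ->.
    by apply: map_f; rewrite mem_enum.
  - by rewrite !size_map.
apply/ffunP => a.
have := congr1 (fun s => nth (f a) s a) Hs.
rewrite !(nth_map a) -?enumT ?size_enum_ord ?ltn_ord //.
by rewrite !nth_ord_enum.
Qed.

End Incr.
Section Units.
Variables (F : fieldType) (n k : nat).

Lemma cullis_units (r : 'I_k -> 'I_n) : injective r ->
  cullis_det (\matrix_(p, q) (p == r q)%:R : 'M[F]_(n, k)) != 0.
Proof.
move=> rinj.
set R := r @: [set: 'I_k].
have sizeR : size (enum R) = k by rewrite -cardE card_imset // cardsT card_ord.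
have sortR : sorted (@ord_lt n) (enum R).
  have -> : enum R = filter (mem R) (enum 'I_n) by rewrite enumT.
  apply: sorted_filter; first by move=> a b c; rewrite /ord_lt; apply: ltn_trans.
  exact: enum_ord_sorted.
pose f0 : {ffun 'I_k -> 'I_n} := [ffun a => nth (r a) (enum R) a].
have f0R a : f0 a \in R by rewrite ffunE -(mem_enum R) mem_nth // sizeR.
have incr0 : incr_map f0.
  apply/forallP => a; apply/forallP => b; apply/implyP => Hab.
  rewrite !ffunE (set_nth_default (r a) (r b)) ?sizeR //.
  apply: (sorted_ltn_nth _ (r a) sortR) => //; rewrite ?inE ?sizeR //.
  by move=> x y z; rewrite /ord_lt; apply: ltn_trans.
have f0inj := incr_inj incr0.
pose N : 'M[F]_(n, k) := \matrix_(p, a) (p == f0 a)%:R.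
pose PiT : 'M[F]_k := \matrix_(q, a) (f0 a == r q)%:R.
have HN : (\matrix_(p, q) (p == r q)%:R : 'M[F]_(n, k)) *m PiT = N.
  apply/matrixP => p a; rewrite !mxE.
  case/imsetP: (f0R a) => q0 _ Hq0.
  rewrite (bigD1 q0) //= big1 ?addr0.
    by rewrite !mxE Hq0 eqxx mulr1.
  move=> q Hq; rewrite !mxE Hq0 (inj_eq rinj) [q0 == q]eq_sym (negbTE Hq) mulr0 //.

have : cullis_det N != 0.
  rewrite /cullis_det (bigD1 f0) //= big1 ?addr0.
    have -> : (\matrix_(a < k, j < k) N (f0 a) j) = 1%:M.
      by apply/matrixP => a j; rewrite !mxE (inj_eq f0inj).
    by rewrite det1 mulr1 /cullis_sgn expf_neq0 // oppr_eq0 oner_eq0.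
  move=> f /andP [Hf Hne].
  case: (boolP [forall a, [exists b, f a == f0 b]]) => [H | H].
    suff E : f = f0 by rewrite E eqxx in Hne.
    apply: incr_eq => // a; have /existsP [b /eqP Hb] := forallP H a.
    by exists b.
  case/forallPn: H => a /existsPn Ha.
  rewrite (expand_det_row _ a) big1 ?mulr0 // => j _.
  by rewrite !mxE (negbTE (Ha j)) mul0r.
rewrite -HN cullis_mulmx; apply: contraNneq => ->; by rewrite mul0r.
Qed.
End Units.
Section Build.
Variables (n k : nat) (P : {set 'I_n * 'I_k}).

Definition good_state (m : nat) (U : {set 'I_k}) (r : 'I_k -> 'I_n) (tm : 'I_k -> nat) :=
  [/\ #|U| = m, {in U &, injective r}, (forall q, q \in U -> (tm q < m)%N),
   (forall q p, q \in U -> (p, q) \in P ->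
      exists2 q', q' \in U & (tm q' < tm q)%N /\ r q' = p)
  & (#|[set e in P | e.1 \notin r @: U]| == 0%N) ||
    (#|[set e in P | e.1 \notin r @: U]| + m < k)%N].

Lemma build_base (i : 'I_n) (j' : 'I_k) (hP : (#|P| <= k)%N)
  (hj : forall e, e \in P -> e.2 != j')
  (hi : (1 < #|[set e in P | e.1 == i]|)%N) :
  good_state 1 [set j'] (fun _ => i) (fun _ => 0%N).
Proof.
split.
- exact: cards1.
- by move=> x y /set1P -> /set1P ->.
- by [].
- by move=> q p /set1P -> /hj /=; rewrite eqxx.
apply/orP; right.
rewrite imset_set1.
have := cardsID [set e | e.1 == i] P.
have -> : P :&: [set e | e.1 == i] = [set e in P | e.1 == i].
  by apply/setP => e; rewrite !inE.
have -> : P :\: [set e | e.1 == i] = [set e in P | e.1 \notin [set i]].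
  by apply/setP => e; rewrite !inE andbC.
move=> H; move: hi hP; rewrite -H.
set a := #|[set e in P | e.1 == i]|; set b := #|[set e in P | e.1 \notin [set i]]|.
lia.
Qed.

Lemma build_step (hkn : (k <= n)%N) m U r tm : (0 < m)%N -> (m < k)%N ->
  good_state m U r tm -> exists U' r' tm', good_state m.+1 U' r' tm'.
Proof.
move=> m0 mk [cU rinj tmU tri inv].
set Rem := [set e in P | e.1 \notin r @: U].
have [q qU qfree] : exists2 q, q \notin U & forall e, e \in Rem -> e.2 != q.
  set Cq := [set e.2 | e in Rem].
  have cC : (#|Cq| < #|~: U|)%N.
    have h1 : (#|Cq| <= #|Rem|)%N := leq_imset_card _ _.
    have h2 := cardsC U; rewrite card_ord in h2.
    move: inv; rewrite -/Rem => /orP [/eqP h0 | h0]; lia.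
  have : ~~ (~: U \subset Cq) by apply: contraL cC => /subset_leq_card; rewrite leqNgt.
  case/subsetPn => q; rewrite inE => qU qC; exists q => // e eR.
  by apply: contraNneq qC => <-; apply: imset_f.
have [p0 p0U p0rem] : exists2 p0, p0 \notin r @: U &
    (Rem != set0 -> exists2 e, e \in Rem & e.1 = p0).
  case: (boolP (Rem == set0)) => [/eqP R0 | /set0Pn [e eR]].
    have : (0 < #|~: (r @: U)|)%N.
      have h1 : (#|r @: U| <= #|U|)%N := leq_imset_card _ _.
      have h2 := cardsC (r @: U); rewrite card_ord in h2; lia.
    case/card_gt0P => p0; rewrite inE => Hp0; exists p0 => //.
  exists e.1; first by move: eR; rewrite inE => /andP [].
  by move=> _; exists e.
pose r' := fun x => if x == q then p0 else r x.
pose tm' := fun x => if x == q then m else tm x.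
have imr' : r' @: (q |: U) = p0 |: r @: U.
  rewrite imsetU1 /r' eqxx; congr (_ |: _); apply: eq_in_imset => x xU.
  by case: eqP => // xq; rewrite -xq xU in qU.
exists (q |: U), r', tm'; split.
- by rewrite cardsU1 qU cU.
- move=> x y /setU1P [-> | xU] /setU1P [-> | yU] //; rewrite /r' ?eqxx.
  + have yq : y != q by apply: contraNneq qU => <-.
    rewrite (negbTE yq) => e; by rewrite e imset_f in p0U.
  + have xq : x != q by apply: contraNneq qU => <-.
    rewrite (negbTE xq) => e; by rewrite -e imset_f in p0U.
  + have xq : x != q by apply: contraNneq qU => <-.
    have yq : y != q by apply: contraNneq qU => <-.
    by rewrite (negbTE xq) (negbTE yq); apply: rinj.
- move=> x /setU1P [-> | xU]; rewrite /tm' ?eqxx //.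
  have xq : x != q by apply: contraNneq qU => <-.
  by rewrite (negbTE xq); apply: ltnW; rewrite ltnS; apply: tmU.
- move=> x p /setU1P [-> | xU] Hp.
  + case: (boolP (p \in r @: U)) => [/imsetP [x' x'U ->] | pU].
      have x'q : x' != q by apply: contraNneq qU => <-.
      exists x'; first by rewrite setU1r.
      by rewrite /tm' /r' eqxx (negbTE x'q); split => //; apply: tmU.
    by have := qfree (p, q); rewrite inE Hp pU eqxx => /(_ isT).
  + have xq : x != q by apply: contraNneq qU => <-.
    have [x' x'U [Hlt Hr]] := tri x p xU Hp.
    have x'q : x' != q by apply: contraNneq qU => <-.
    exists x'; first by rewrite setU1r.
    by rewrite /tm' /r' (negbTE xq) (negbTE x'q).
rewrite imr'.
have sub : [set e in P | e.1 \notin p0 |: r @: U] \subset Rem.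
  apply/subsetP => e; rewrite !inE => /andP [-> /norP [_ ->]] //.
case: (boolP (Rem == set0)) => [/eqP R0 | Rn0].
  by move: sub; rewrite R0 subset0 => /eqP ->; rewrite cards0.
have [e eR ep0] := p0rem Rn0.
have pr : [set e in P | e.1 \notin p0 |: r @: U] \proper Rem.
  rewrite properEneq sub andbT; apply/eqP => E.
  by move: eR; rewrite -E !inE ep0 eqxx /= andbF.
have := proper_card pr.
move: inv; rewrite -/Rem -card_gt0 in Rn0 *; move=> /orP [/eqP h0 | h0] h; apply/orP; right; lia.
Qed.

End Build.
Section Final.
Variables (F : fieldType) (n k : nat) (P : {set 'I_n * 'I_k}).

Lemma build_all (hkn : (k <= n)%N) (i : 'I_n) (j' : 'I_k) (hP : (#|P| <= k)%N)
  (hj : forall e, e \in P -> e.2 != j')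
  (hi : (1 < #|[set e in P | e.1 == i]|)%N) :
  exists r : 'I_k -> 'I_n, exists tm : 'I_k -> nat, injective r /\
    forall q p, (p, q) \in P -> exists q', (tm q' < tm q)%N /\ r q' = p.
Proof.
have k0 : (0 < k)%N by apply: leq_ltn_trans (ltn_ord j').
have H : forall m, (0 < m <= k)%N -> exists U r tm, @good_state n k P m U r tm.
  elim => [// | m IH] /andP [_ Hm].
  case: m IH Hm => [|m] IH Hm.
    by exists [set j'], (fun _ => i), (fun _ => 0%N); apply: build_base.
  have [U [r [tm G]]] := IH (ltnW Hm).
  exact: (@build_step n k P hkn m.+1 U r tm (ltn0Sn m) Hm G).
have [U [r [tm [cU rinj tmU tri _]]]] := H k (andb_true_intro (conj k0 (leqnn k))).
have UT : U = [set: 'I_k].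
  by apply/eqP; rewrite eqEcard subsetT cardsT card_ord cU leqnn.
exists r, tm; split.
  by move=> x y; apply: rinj; rewrite UT inE.
move=> q p Hp; have qU : q \in U by rewrite UT inE.
have [q' _ H'] := tri q p qU Hp.
by exists q'.
Qed.

Lemma good_M (hkn : (k <= n)%N) (i : 'I_n) (j' : 'I_k) (hP : (#|P| <= k)%N)
  (hj : forall e, e \in P -> e.2 != j')
  (hi : (1 < #|[set e in P | e.1 == i]|)%N) :
  exists M : 'M[F]_(n, k), forall Y : 'M[F]_(n, k),
    (forall e, e \notin P -> Y e.1 e.2 = M e.1 e.2) -> cullis_det Y != 0.
Proof.
have [r [tm [rinj tri]]] := build_all hkn hP hj hi.
exists (\matrix_(p, q) (p == r q)%:R) => Y HY.
pose E : 'M[F]_k := \matrix_(q', q) Y (r q') q.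
have HYe p q : (p, q) \notin P -> Y p q = (p == r q)%:R.
  by move=> h; rewrite (HY (p, q) h) mxE.
have YE : Y = (\matrix_(p, q) (p == r q)%:R) *m E.
  apply/matrixP => p q; rewrite !mxE.
  case: (boolP [exists q0, p == r q0]) => [/existsP [q0 /eqP Hq0] | Hn].
    rewrite (bigD1 q0) //= big1 ?addr0.
      by rewrite !mxE Hq0 eqxx mul1r.
    move=> q' Hq'; rewrite !mxE Hq0 (inj_eq rinj) eq_sym (negbTE Hq') mul0r //.
  rewrite big1.
    rewrite HYe.
      by case: eqP => // Hp; move/existsPn: Hn => /(_ q); rewrite Hp eqxx.
    apply/negP => /tri [q' [_ Hq']].
    by move/existsPn: Hn => /(_ q'); rewrite Hq' eqxx.
  move=> q' _; rewrite !mxE.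
  by move/existsPn: Hn => /(_ q') /negbTE ->; rewrite mul0r.
have notP q : (r q, q) \notin P.
  apply/negP => /tri [q' [Hlt Hq']].
  by move: Hlt; rewrite (rinj _ _ Hq') ltnn.
have dE : \det E = 1.
  apply: (det_ordtrig (tm := tm)).
    by move=> q; rewrite mxE HYe ?notP // eqxx.
  move=> q' q Hne; rewrite mxE.
  case: (boolP ((r q', q) \in P)) => [/tri [q'' [Hlt Hq'']] | Hn].
    by rewrite -(rinj _ _ Hq'').
  by rewrite HYe // (inj_eq rinj) (negbTE Hne) eqxx.
rewrite YE cullis_mulmx dE mulr1; exact: cullis_units.
Qed.
End Final.
Section LinAlg.
Variables (F : fieldType) (n k : nat) (V : {vspace 'M[F]_(n, k)})
  (B : {set 'I_n * 'I_k}).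
Hypothesis Bb : mx_basis V B.

Local Notation d := (\dim V).
Local Notation vb := (vbasis V).

Definition Xof (z : 'rV[F]_d) : 'M[F]_(n, k) := \sum_(t < d) z 0 t *: vb`_t.

Lemma Xof_mem z : Xof z \in V.
Proof.
apply: memv_suml => t _; apply: memvZ; apply: vbasis_mem.
by apply: mem_nth; rewrite size_tuple.
Qed.

Lemma XofE z p q : Xof z p q = \sum_(t < d) z 0 t * vb`_t p q.
Proof. by rewrite summxE; apply: eq_bigr => t _; rewrite mxE. Qed.

Lemma Xof_eq0 z : Xof z = 0 -> z = 0.
Proof.
move=> H; apply/rowP => t; rewrite mxE.
by move/freeP: (basis_free (vbasisP V)) => /(_ (fun t => z 0 t) H).
Qed.

Lemma zero_on_B X : X \in V -> (forall e, e \in B -> X e.1 e.2 = 0) -> X = 0.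
Proof.
case: Bb => Bind Bmax XV HX; apply/matrixP => p q; rewrite mxE.
case: (boolP ((p, q) \in B)) => [pB | pB]; first exact: (HX (p, q) pB).
apply/eqP; apply: contraT => Xe.
exfalso; apply: (Bmax ((p, q) |: B)); first by rewrite properUr // sub1set.
move=> c Hc.
have ce : c (p, q) = 0.
  have := Hc X XV; rewrite big_setU1 //= big1 ?addr0.
    by move/eqP; rewrite mulf_eq0 (negbTE Xe) orbF => /eqP.
  by move=> e eB; rewrite HX // mulr0.
have cB : forall e, e \in B -> c e = 0.
  apply: Bind => Y YV; have := Hc Y YV.
  by rewrite big_setU1 //= ce mul0r add0r.
by move=> e /setU1P [-> | /cB].
Qed.

Definition Amx : 'M[F]_(#|B|, d) :=
  \matrix_(p, t) vb`_t (enum_val p).1 (enum_val p).2.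

Lemma mulAT z p : (z *m Amx^T) 0 p = Xof z (enum_val p).1 (enum_val p).2.
Proof. by rewrite XofE !mxE; apply: eq_bigr => t _; rewrite !mxE. Qed.

Lemma basis_big : (d <= #|B|)%N.
Proof.
have : row_free Amx^T.
  rewrite -kermx_eq0; apply/eqP/row_matrixP => t; rewrite row0.
  set z := row t _.
  have hz : z *m Amx^T = 0 by rewrite /z -row_mul mulmx_ker row0.
  apply: Xof_eq0; apply: zero_on_B; first exact: Xof_mem.
  move=> e eB; rewrite -(enum_rankK_in eB eB) -mulAT hz mxE //.
move/eqP => <-; exact: rank_leq_col.
Qed.

Lemma basis_surj (y : 'M[F]_(n, k)) :
  exists2 X, X \in V & forall e, e \in B -> X e.1 e.2 = y e.1 e.2.
Proof.
have rf : row_free Amx.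
  rewrite -kermx_eq0; apply/eqP/row_matrixP => p0; rewrite row0.
  set v := row p0 _.
  have hv : v *m Amx = 0 by rewrite /v -row_mul mulmx_ker row0.
  pose c := fun e => \sum_(p | enum_val p == e) v 0 p.
  have cE p : c (enum_val p) = v 0 p.
    rewrite /c (eq_bigl (pred1 p)) ?big_pred1_eq // => p'.
    by rewrite /= (inj_eq enum_val_inj).
  have Hc : forall X, X \in V -> \sum_(e in B) c e * X e.1 e.2 = 0.
    move=> X XV; rewrite (big_enum_val (fun e => c e * X e.1 e.2)) /=.
    rewrite (coord_vbasis XV).
    under eq_bigr => p _ do rewrite cE summxE mulr_sumr.
    rewrite exchange_big /= big1 // => t _.
    have h0 : \sum_p v 0 p * Amx p t = 0.
      by have := congr1 (fun M : 'rV[F]_d => M 0 t) hv; rewrite !mxE.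
    transitivity (coord vb t X * \sum_p v 0 p * Amx p t); last by rewrite h0 mulr0.
    rewrite mulr_sumr; apply: eq_bigr => p _; rewrite !mxE.
    by rewrite mulrCA.
  case: Bb => Bind _.
  apply/rowP => p; rewrite [RHS]mxE -cE; apply: (Bind c Hc); exact: enum_valP.
have rfT : row_full Amx^T by rewrite /row_full mxrank_tr; exact: rf.
pose yv : 'rV[F]_#|B| := \row_p y (enum_val p).1 (enum_val p).2.
have /submxP [z Hz] : (yv <= Amx^T)%MS by apply: submx_full.
exists (Xof z); first exact: Xof_mem.
move=> e eB; rewrite -(enum_rankK_in eB eB) -mulAT -Hz mxE //.
Qed.

End LinAlg.
Unset Implicit Arguments.
Theorem mainTheorem4 (F : fieldType) (n k : nat) (hk : (1 < k)%N) (hnk : (k <= n)%N)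
  (s : 'M[F]_(n, k)) (V : {vspace 'M[F]_(n, k)})
  (hcodim : (n * k - \dim V)%N = k)
  (hdet : forall X : 'M[F]_(n, k), X - s \in V -> cullis_det X = 0)
  (Bs : {set 'I_n * 'I_k}) (hB : mx_cobasis V Bs) :
  (exists j' : 'I_k, forall e, e \in Bs -> e.2 != j') ->
  forall i : 'I_n, (#|[set e in Bs | e.1 == i]| <= 1)%N.
Proof.
move=> [j' hj'] i; rewrite leqNgt; apply/negP => hi.
case: hB hj' hi => B [Bb ->] hj' hi.
have hP : (#|~: B| <= k)%N.
  have h1 := basis_big Bb.
  have h2 := cardsC B; rewrite card_prod !card_ord in h2.
  move: h1 h2 hcodim; set a := #|B|; set b := #|~: B|; set d := \dim V; lia.
have [M HM] := good_M F hnk hP hj' hi.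
have [X XV HX] := basis_surj Bb (M - s).
have := hdet (X + s); rewrite addrK => /(_ XV) /eqP; apply/negP.
apply: HM => e; rewrite inE negbK => eB.
by rewrite mxE HX // !mxE subrK.
Qed.
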